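(* Let $g:\mathbb{R}^N\to\mathbb{R}\cup\{+\infty\}$ be proper and lower semi-continuous, and let $f:\mathbb{R}^N\to\mathbb{R}$ be continuously differentiable such that, for some $\mathbf{L}\in\mathbb{S}_{++}(N)$, the gradient of $f\circ\mathbf{L}^{-1/2}$ is $1$-Lipschitz continuous; assume $f+g$ is bounded from below. Suppose moreover that $f(x)=\frac12\langle x,\mathbf{H}x\rangle+\langle b,x\rangle+c$ with $\mathbf{H}\in\mathbb{S}_{++}(N)$, $b\in\mathbb{R}^N$, $c\in\mathbb{R}$. Let $x_k\in\mathbb{R}^N$, let $\mathbf{D}\in\mathbb{R}^{N\times R}$ have linearly independent columns, and for $\boldsymbol\beta\in\mathbb{R}^R$ put $y^{(\boldsymbol\beta)}:=x_k+\mathbf{D}\boldsymbol\beta$. Let $\mathbf{T}\in\mathbb{S}_{++}(N)$ be such that $\mathbf{M}:=\mathbf{T}-\mathbf{H}\in\mathbb{S}_{++}(N)$, and consider the problem $$\min_{x\in\mathbb{R}^N}\min_{\boldsymbol\beta\in\mathbb{R}^R}\ \ell(x;y^{(\boldsymbol\beta)})+\tfrac12\|x-y^{(\boldsymbol\beta)}\|_{\mathbf{T}}^2,\qquad \ell(x;y):=g(x)+f(y)+\langle\nabla f(y),x-y\rangle. \quad (\ast)$$ Then, for each fixed $x$, the inner minimization over $\boldsymbol\beta$ is solved by $$\boldsymbol\beta^*=(\mathbf{D}^\top\mathbf{M}\mathbf{D})^{-1}\mathbf{D}^\top\mathbf{M}(x-x_k).$$ Moreover, problem $(\ast)$ is equivalent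 to $$x_{k+1}\in\operatorname*{argmin}_{x\in\mathbb{R}^N}\ g(x)+\tfrac12\big\|x-x_k+\mathbf{Q}^{-1}\nabla f(x_k)\big\|_{\mathbf{Q}}^2,$$ (i.e. the $x$-components of minimizers of $(\ast)$ are exactly the minimizers of this problem), where $$\mathbf{Q}:=\mathbf{T}-\mathbf{U}^\top\mathbf{U}\in\mathbb{S}_{++}(N),\qquad \mathbf{U}:=(\mathbf{D}^\top\mathbf{M}\mathbf{D})^{-1/2}\mathbf{D}^\top\mathbf{M},$$ $\mathbf{U}^\top\mathbf{U}$ has rank $R$, and $$\mathbf{Q}^{-1}=\mathbf{T}^{-1}+\mathbf{T}^{-1}\mathbf{U}^\top(\mathbf{I}-\mathbf{U}\mathbf{T}^{-1}\mathbf{U}^\top)^{-1}\mathbf{U}\mathbf{T}^{-1}.$$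
   Context: $\mathbb{S}_{+}(N)$ (resp. $\mathbb{S}_{++}(N)$) denotes the set of symmetric positive semi-definite (resp. positive definite) $N\times N$ real matrices. For a matrix $\mathbf{V}$, $\|x\|_{\mathbf{V}}^2:=\langle x,\mathbf{V}x\rangle$ and $\langle x,y\rangle_{\mathbf{V}}:=\langle x,\mathbf{V}y\rangle$, with $\langle\cdot,\cdot\rangle$ the standard Euclidean inner product. $\mathbf{I}$ is the identity matrix. *)

(* Defs.v *)
From HB Require Import structures.
From mathcomp Require Import all_boot all_order all_algebra.
From mathcomp Require Import constructive_ereal reals.
From Stdlib Require Import ClassicalEpsilon.
Set Implicit Arguments. Unset Strict Implicit. Unset Printing Implicit Defensive.
Import Order.TTheory GRing.Theory Num.Theory.
Local Open Scope ring_scope.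

Section Defs.
Variable R : realType.

Definition ip (n : nat) (x y : 'cV[R]_n) : R := (x^T *m y) 0 0.
Definition ipV (n : nat) (V : 'M[R]_n) (x y : 'cV[R]_n) : R := ip x (V *m y).
Definition sqnormV (n : nat) (V : 'M[R]_n) (x : 'cV[R]_n) : R := ipV V x x.
Definition enorm (n : nat) (x : 'cV[R]_n) : R := Num.sqrt (ip x x).

Definition psd (n : nat) (A : 'M[R]_n) : Prop :=
  A^T = A /\ forall x : 'cV[R]_n, 0 <= ip x (A *m x).
Definition spd (n : nat) (A : 'M[R]_n) : Prop :=
  A^T = A /\ forall x : 'cV[R]_n, x != 0 -> 0 < ip x (A *m x).

(* the (principal) square root A^{1/2}: the positive semi-definite S with
   S S = A (unique when A is positive semi-definite) *)
Definition sqrtmx (n : nat) (A : 'M[R]_n) : 'M[R]_n :=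
  epsilon (inhabits 0) (fun S : 'M[R]_n => psd S /\ S *m S = A).

Definition isqrtmx (n : nat) (A : 'M[R]_n) : 'M[R]_n := invmx (sqrtmx A).

Definition is_gradient (n : nat) (F : 'cV[R]_n -> R) (x v : 'cV[R]_n) : Prop :=
  forall eps : R, 0 < eps -> exists2 delta : R, 0 < delta &
    forall h : 'cV[R]_n, enorm h < delta ->
      `|F (x + h) - F x - ip v h| <= eps * enorm h.

Definition continuous_vf (n : nat) (G : 'cV[R]_n -> 'cV[R]_n) : Prop :=
  forall x eps, 0 < eps -> exists2 delta : R, 0 < delta &
    forall y, enorm (y - x) < delta -> enorm (G y - G x) < eps.

Definition C1_with_gradient (n : nat) (F : 'cV[R]_n -> R)
    (dF : 'cV[R]_n -> 'cV[R]_n) : Prop :=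
  (forall x, is_gradient F x (dF x)) /\ continuous_vf dF.

Definition lipschitz1 (n : nat) (G : 'cV[R]_n -> 'cV[R]_n) : Prop :=
  forall x y, enorm (G x - G y) <= enorm (x - y).

Definition proper_fun (n : nat) (g : 'cV[R]_n -> \bar R) : Prop :=
  (forall x, g x != -oo%E) /\ exists x, g x != +oo%E.

Definition lsc (n : nat) (g : 'cV[R]_n -> \bar R) : Prop :=
  forall x (a : R), (a%:E < g x)%E -> exists2 delta : R, 0 < delta &
    forall y, enorm (y - x) < delta -> (a%:E < g y)%E.

Definition is_argmin (T : Type) (h : T -> \bar R) (x : T) : Prop :=
  forall z, (h x <= h z)%E.

End Defs.

(* Main.v *)
Require Import Defs.
From HB Require Import structures.
From mathcomp Require Import all_boot all_order all_algebra.
From mathcomp Require Import constructive_ereal reals.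
From mathcomp Require Import ring lra.
From mathcomp Require Import classical_sets.
Set Implicit Arguments. Unset Strict Implicit.
Import Order.TTheory GRing.Theory Num.Theory.
Local Open Scope ring_scope.

Section IP.
Variable R : realType.
Implicit Types (n : nat).

Lemma ipE n (x y : 'cV[R]_n) : ip x y = \sum_i x i 0 * y i 0.
Proof. by rewrite /ip mxE; apply: eq_bigr => i _; rewrite mxE. Qed.

Lemma ipC n (x y : 'cV[R]_n) : ip x y = ip y x.
Proof. by rewrite !ipE; apply: eq_bigr => i _; rewrite mulrC. Qed.

Lemma ipDl n (x y z : 'cV[R]_n) : ip (x + y) z = ip x z + ip y z.
Proof. by rewrite !ipE -big_split; apply: eq_bigr => i _; rewrite !mxE mulrDl. Qed.

Lemma ipDr n (x y z : 'cV[R]_n) : ip z (x + y) = ip z x + ip z y.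
Proof. by rewrite ipC ipDl ![ip _ z]ipC. Qed.

Lemma ipZl n a (x y : 'cV[R]_n) : ip (a *: x) y = a * ip x y.
Proof. by rewrite !ipE mulr_sumr; apply: eq_bigr => i _; rewrite !mxE mulrA. Qed.

Lemma ipZr n a (x y : 'cV[R]_n) : ip x (a *: y) = a * ip x y.
Proof. by rewrite ipC ipZl ipC. Qed.

Lemma ipNl n (x y : 'cV[R]_n) : ip (- x) y = - ip x y.
Proof. by rewrite -scaleN1r ipZl mulN1r. Qed.

Lemma ipNr n (x y : 'cV[R]_n) : ip x (- y) = - ip x y.
Proof. by rewrite ipC ipNl ipC. Qed.

Lemma ipBl n (x y z : 'cV[R]_n) : ip (x - y) z = ip x z - ip y z.
Proof. by rewrite ipDl ipNl. Qed.

Lemma ipBr n (x y z : 'cV[R]_n) : ip z (x - y) = ip z x - ip z y.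
Proof. by rewrite ipDr ipNr. Qed.

Lemma ip0l n (x : 'cV[R]_n) : ip 0 x = 0.
Proof. by rewrite ipE big1 // => i _; rewrite mxE mul0r. Qed.

Lemma ip0r n (x : 'cV[R]_n) : ip x 0 = 0.
Proof. by rewrite ipC ip0l. Qed.

Lemma ipM n m (A : 'M[R]_(n, m)) x y : ip x (A *m y) = ip (A^T *m x) y.
Proof. by rewrite /ip trmx_mul trmxK mulmxA. Qed.

Lemma ipMl n m (A : 'M[R]_(n, m)) x y : ip (A *m x) y = ip x (A^T *m y).
Proof. by rewrite ipM trmxK. Qed.

Lemma ip_ge0 n (x : 'cV[R]_n) : 0 <= ip x x.
Proof. by rewrite ipE sumr_ge0 // => i _; rewrite -expr2 sqr_ge0. Qed.

Lemma ip_eq0 n (x : 'cV[R]_n) : (ip x x == 0) = (x == 0).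
Proof.
apply/idP/idP => [|/eqP->]; last by rewrite ip0l.
rewrite ipE psumr_eq0 => [/allP H|i _]; last by rewrite -expr2 sqr_ge0.
apply/eqP/matrixP => i j; rewrite (ord1 j) mxE.
have := H i (mem_index_enum _); rewrite -expr2 sqrf_eq0 => /eqP //.
Qed.

Lemma ip_gt0 n (x : 'cV[R]_n) : x != 0 -> 0 < ip x x.
Proof. by move=> nx; rewrite lt_def ip_eq0 nx ip_ge0. Qed.

Lemma trD m n (A B : 'M[R]_(m, n)) : (A + B)^T = A^T + B^T.
Proof. by apply/matrixP => i j; rewrite !mxE. Qed.
Lemma trB m n (A B : 'M[R]_(m, n)) : (A - B)^T = A^T - B^T.
Proof. by apply/matrixP => i j; rewrite !mxE. Qed.
Lemma trN m n (A : 'M[R]_(m, n)) : (- A)^T = - A^T.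
Proof. by apply/matrixP => i j; rewrite !mxE. Qed.
Lemma trZ m n a (A : 'M[R]_(m, n)) : (a *: A)^T = a *: A^T.
Proof. by apply/matrixP => i j; rewrite !mxE. Qed.

End IP.

Section QF.
Variable R : realType.

Lemma coord_sq_le n (x : 'cV[R]_n) i : x i 0 ^+ 2 <= ip x x.
Proof.
rewrite ipE (bigD1 i) //= expr2 lerDl.
by apply: sumr_ge0 => j _; rewrite -expr2 sqr_ge0.
Qed.

Lemma qf_bound n (B : 'M[R]_n) : exists2 C, 0 < C &
  forall x, `|ip x (B *m x)| <= C * ip x x.
Proof.
exists (1 + \sum_i \sum_j `|B i j|).
  by rewrite ltr_pwDl // sumr_ge0 // => i _; rewrite sumr_ge0.
move=> x; rewrite ipE.
apply: (le_trans (ler_norm_sum _ _ _)).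
rewrite mulrDl mul1r; apply: ler_wpDl; first exact: ip_ge0.
rewrite mulr_suml; apply: ler_sum => i _.
rewrite mxE mulr_sumr mulr_suml; apply: (le_trans (ler_norm_sum _ _ _)).
apply: ler_sum => j _.
rewrite mulrCA normrM mulrC [X in _ <= X]mulrC ler_wpM2r //.
have h1 := coord_sq_le x i; have h2 := coord_sq_le x j.
rewrite normrM.
have := sqr_ge0 (`|x i 0| - `|x j 0|).
rewrite -(real_normK (num_real (x i 0))) in h1.
rewrite -(real_normK (num_real (x j 0))) in h2.
move: (normr_ge0 (x i 0)) (normr_ge0 (x j 0)) => a0 b0.
nra.
Qed.


Lemma ip_scalar n a (x : 'cV[R]_n) : ip x (a%:M *m x) = a * ip x x.
Proof. by rewrite mul_scalar_mx ipZr. Qed.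

Lemma aux_ineq (a p c C : R) : 0 < C ->
  0 <= a - C^-1 * p - (C^-1 * p - C^-1 * (C^-1 * c)) -> c <= C * p -> p <= C * a.
Proof.
move=> C0 h hc.
have E : C * C * (a - C^-1 * p - (C^-1 * p - C^-1 * (C^-1 * c))) =
   C * C * a - 2 * C * p + c by field; rewrite gt_eqF.
have := mulr_ge0 (mulr_ge0 (ltW C0) (ltW C0)) h; rewrite E => h2.
have h3 : 0 <= C * (C * a - p) by nra.
move: h3; rewrite pmulr_rge0 // subr_ge0 //.
Qed.

Lemma sym_eig n (B : 'M[R]_n.+1) : B^T = B ->
  exists mu (v : 'cV[R]_n.+1), [/\ v != 0, B *m v = mu *: v &
     forall x, ip x (B *m x) <= mu * ip x x].
Proof.
move=> sB.
pose E := (fun r : R => exists x : 'cV[R]_n.+1, ip x x = 1 /\ r = ip x (B *m x)).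
have [C C0 HC] := qf_bound B.
have hE : has_sup E.
  split.
    exists (ip (delta_mx ord0 ord0) (B *m delta_mx ord0 ord0)); exists (delta_mx ord0 ord0); split => //.
    rewrite ipE (bigD1 ord0) //= big1 => [|i ni0]; last by rewrite !mxE (negbTE ni0) mul0r.
    by rewrite !mxE eqxx mulr1 addr0.
  exists C => r [x [x1 ->]].
  by apply: le_trans (ler_norm _) _; rewrite -[C]mulr1 -x1 HC.
pose mu := sup E.
have Hub : forall x, ip x (B *m x) <= mu * ip x x.
  move=> x; have [->|nx] := eqVneq x 0; first by rewrite mulmx0 !ip0l mulr0.
  have px := ip_gt0 nx.
  pose s := Num.sqrt (ip x x).
  have s0 : 0 < s by rewrite sqrtr_gt0.
  have ss : s * s = ip x x by rewrite -expr2 sqr_sqrtr // ltW.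
  have Ey : E (ip (s^-1 *: x) (B *m (s^-1 *: x))).
    exists (s^-1 *: x); split => //.
    rewrite ipZl ipZr mulrA -ss.
    by field; rewrite gt_eqF.
  have := sup_upper_bound hE Ey.
  rewrite -/mu -scalemxAr ipZl ipZr mulrA => h.
  have : s * s * (s^-1 * s^-1 * ip x (B *m x)) <= s * s * mu.
    by rewrite ler_wpM2l // mulr_ge0 // ltW.
  have e : s * s * (s^-1 / s * ip x (B *m x)) = ip x (B *m x).
    by field; rewrite gt_eqF.
  by rewrite e ss mulrC.
pose A := mu%:M - B.
have sA : A^T = A by rewrite /A linearB /= tr_scalar_mx sB.
have qA : forall x, ip x (A *m x) = mu * ip x x - ip x (B *m x).
  by move=> x; rewrite /A mulmxBl ipBr ip_scalar.
have nA : A \notin unitmx.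
  apply/negP => uA.
  pose Ai := invmx A.
  have [C' C'0 HC'] := qf_bound Ai.
  have key : forall x, ip x x <= C' * ip x (A *m x).
    move=> x; pose y := Ai *m x.
    have Ay : A *m y = x by rewrite /y mulmxA mulmxV // mul1mx.
    have := (ip_ge0 (x - C'^-1 *: y)).
    have psd : 0 <= ip (x - C'^-1 *: y) (A *m (x - C'^-1 *: y)).
      by rewrite qA subr_ge0 Hub.
    move: psd; rewrite mulmxBr -scalemxAr Ay !ipBl !ipBr !ipZl !ipZr.
    rewrite [ip y x]ipC (ipM A y) sA Ay.
    have hc : ip x y <= C' * ip x x.
      by apply: le_trans (ler_norm _) (HC' x).
    move=> h _; exact: aux_ineq h hc.
  have iC : 0 < C'^-1 by rewrite invr_gt0.
  have [e [x [x1 ->]] he] := @sup_adherent _ E _ iC hE.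
  have := key x; rewrite qA x1 mulr1 -/mu => h.
  have := ler_wpM2l (ltW iC) h.
  rewrite mulr1 mulrA mulVf ?lt0r_neq0 // mul1r -/mu => h'.
  move: he; rewrite -/mu; lra.
have : \det A == 0 by move: nA; rewrite unitmxE unitfE negbK.
case/det0P => v nv vA.
exists mu, v^T; split => //.
- by rewrite -(inj_eq (@trmx_inj _ _ _)) trmxK trmx0.
- have : A *m v^T = 0 by rewrite -sA -trmx_mul vA trmx0.
  rewrite /A mulmxBl mul_scalar_mx => /eqP; rewrite subr_eq0 eq_sym => /eqP //.
Qed.

End QF.

Section Eig.
Variable R : realType.

Definition eig_inv n (K : 'M[R]_n) k (V : 'M[R]_n) (d : 'rV[R]_n) :=
  [/\ V^T *m V = pid_mx k, K *m V = V *m diag_mx d & forall j, 0 < d 0 j].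

Lemma col_zero n k (V : 'M[R]_n) : V^T *m V = pid_mx k ->
  forall i (j : 'I_n), (k <= j)%N -> V i j = 0.
Proof.
move=> h i j kj.
have : ip (col j V) (col j V) = (V^T *m V) j j.
  by rewrite ipE mxE; apply: eq_bigr => l _; rewrite !mxE.
rewrite h mxE eqxx /= ltnNge kj /= => e.
have {e} : ip (col j V) (col j V) = 0 by rewrite e.
move/eqP; rewrite ip_eq0 => /eqP/matrixP/(_ i 0); rewrite !mxE //.
Qed.

Lemma V_pid n k (V : 'M[R]_n) : V^T *m V = pid_mx k -> V *m pid_mx k = V.
Proof.
move=> h; apply/matrixP => i j; rewrite mxE (bigD1 j) //= big1 => [|l nl].
  rewrite mxE eqxx /= addr0; case: ltnP => jk; first by rewrite mulr1.
  by rewrite mulr0 (col_zero h i jk).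
rewrite mxE.
have -> : (nat_of_ord l == nat_of_ord j) = false by apply/negbTE.
by rewrite mulr0.
Qed.


Lemma pid_not_unit n k : (k < n)%N -> pid_mx k \notin (@unitmx R n).
Proof.
move=> kn; apply/negP => u.
pose k0 := Ordinal kn.
have h : (pid_mx k : 'M[R]_n) *m (delta_mx k0 0 : 'cV[R]_n) = 0.
  apply/matrixP => i j; rewrite !mxE big1 // => l _; rewrite !mxE.
  case: eqP => [eil|]; last by rewrite mul0r.
  case: eqP => [elk|]; last by rewrite mulr0.
  by rewrite eil elk /= ltnn mul0r.
have : (delta_mx k0 0 : 'cV[R]_n) = 0.
  by rewrite -[delta_mx _ _]mul1mx -(mulVmx u) -mulmxA h mulmx0.
move/matrixP/(_ k0 0); rewrite !mxE !eqxx /= => /eqP; rewrite oner_eq0 //.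
Qed.

Lemma eig_step n (K : 'M[R]_n.+1) k V d : K^T = K ->
  (forall x, x != 0 -> 0 < ip x (K *m x)) -> (k < n.+1)%N ->
  eig_inv K k V d -> exists V' d', eig_inv K k.+1 V' d'.
Proof.
move=> sK pK hk [hV KV dpos].
pose P := 1%:M - V *m V^T.
have VVV : V^T *m V *m V^T = V^T.
  by rewrite hV -[in RHS](V_pid hV) trmx_mul tr_pid_mx.
have VP : V^T *m P = 0 by rewrite /P mulmxBr mulmx1 mulmxA VVV subrr.
have sP : P^T = P by rewrite /P trB trmx1 trmx_mul trmxK.
pose B := P *m K *m P.
have sB : B^T = B by rewrite /B !trmx_mul sP sK mulmxA.
have [mu [v [nv Bv hmu]]] := sym_eig sB.
have [w nw Vw] : exists2 w : 'cV[R]_n.+1, w != 0 & V^T *m w = 0.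
  have nu : V \notin unitmx.
    apply/negP => uV; move: (pid_not_unit hk); rewrite -hV unitmx_mul unitmx_tr uV //.
  have : \det V == 0 by move: nu; rewrite unitmxE unitfE negbK.
  case/det0P => u nu0 uV; exists u^T.
    by rewrite -(inj_eq (@trmx_inj _ _ _)) trmxK trmx0.
  by rewrite -trmx_mul uV trmx0.
have Pw : P *m w = w by rewrite /P mulmxBl mul1mx -mulmxA Vw mulmx0 subr0.
have wBw : ip w (B *m w) = ip w (K *m w).
  by rewrite /B -mulmxA Pw -mulmxA (ipM P) sP Pw.
have mu0 : 0 < mu.
  have := hmu w; rewrite wBw => h1.
  have h2 := pK w nw; have h3 := ip_gt0 nw.
  nra.
have Vv : V^T *m v = 0.
  have : mu *: (V^T *m v) = 0 by rewrite scalemxAr -Bv /B !mulmxA VP !mul0mx.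
  move/eqP; rewrite scaler_eq0 (gt_eqF mu0) /= => /eqP //.
have Pv : P *m v = v by rewrite /P mulmxBl mul1mx -mulmxA Vv mulmx0 subr0.
have VK : V^T *m K = diag_mx d *m V^T.
  by rewrite -[K]sK -trmx_mul KV trmx_mul tr_diag_mx.
have Kv : K *m v = mu *: v.
  rewrite -Bv /B -!mulmxA Pv /P mulmxBl mul1mx -!mulmxA (mulmxA V^T K v) VK.
  by rewrite -mulmxA Vv !mulmx0 subr0.
pose s := Num.sqrt (ip v v).
have s0 : 0 < s by rewrite sqrtr_gt0 ip_gt0.
pose u := s^-1 *: v.
have uu : ip u u = 1.
  rewrite /u ipZl ipZr mulrA.
  have ss : s * s = ip v v by rewrite -expr2 sqr_sqrtr // ltW // ip_gt0.
  by rewrite -ss; field; rewrite gt_eqF.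
have Ku : K *m u = mu *: u by rewrite /u -scalemxAr Kv scalerA mulrC -scalerA.
have Vu : V^T *m u = 0 by rewrite /u -scalemxAr Vv scaler0.
have uV : u^T *m V = 0 by rewrite -[V]trmxK -trmx_mul Vu trmx0.
have utu : u^T *m u = 1%:M.
  apply/matrixP => i j; rewrite (ord1 i) (ord1 j) [RHS]mxE eqxx mulr1n; exact: uu.
pose k0 : 'I_n.+1 := Ordinal hk.
pose e : 'M[R]_(1, n.+1) := delta_mx 0 k0.
exists (V + u *m e), (\row_j (if j == k0 then mu else d 0 j)); split.
- rewrite trD trmx_mul mulmxDl !mulmxDr hV !mulmxA Vu mul0mx addr0.
  rewrite -(mulmxA e^T) uV mulmx0 add0r -(mulmxA e^T) utu mulmx1.
  rewrite /e trmx_delta mul_delta_mx.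
  apply/matrixP => i j; rewrite !mxE.
  case: (eqVneq i j) => [<-|nij].
    rewrite eqxx /=; case: (ltngtP i k) => h.
    - have nik : i != k0 by apply/eqP => ei; move: h; rewrite ei /= ltnn.
      by rewrite (negbTE nik) /= addr0 ltnS ltnW.
    - have nik : i != k0 by apply/eqP => ei; move: h; rewrite ei /= ltnn.
      by rewrite (negbTE nik) /= addr0 ltnS leqNgt h.
    - have ei : i = k0 by apply/val_inj.
      by rewrite ei /= eqxx ltnSn add0r.
  have -> : (nat_of_ord i == nat_of_ord j) = false by apply/negbTE.
  rewrite /=; case: (eqVneq i k0) => [ei|] /=; last by rewrite addr0.
  by rewrite -ei eq_sym (negbTE nij) addr0.
- rewrite mulmxDr mulmxA Ku KV -scalemxAl mulmxDl.
  apply/matrixP => i j; rewrite !mul_mx_diag !mxE.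
  case: (eqVneq j k0) => [->|njk].
    rewrite (col_zero hV i (j:=k0) (leqnn k)) mul0r add0r.
    rewrite big_ord1 !mxE !eqxx /=; ring.
  rewrite big_ord1 !mxE (negbTE njk) andbF mulr0 mul0r !addr0.
  by rewrite mulr0 addr0.
- by move=> j; rewrite mxE; case: eqP.
Qed.


Lemma eig_all n (K : 'M[R]_n.+1) : K^T = K ->
  (forall x, x != 0 -> 0 < ip x (K *m x)) ->
  forall k, (k <= n.+1)%N -> exists V d, eig_inv K k V d.
Proof.
move=> sK pK; elim => [_|k IH hk].
  exists 0, (const_mx 1); split.
  - by rewrite mulmx0 pid_mx_0.
  - by rewrite mulmx0 mul0mx.
  - by move=> j; rewrite mxE ltr01.
have [V [d hi]] := IH (ltnW hk).
exact: eig_step sK pK hk hi.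
Qed.

Lemma sqrt_exists n (K : 'M[R]_n) : spd K -> exists S, psd S /\ S *m S = K.
Proof.
case: n K => [|n] K [sK pK].
  exists 0; split; last by apply/matrixP => [[]].
  by split; [rewrite trmx0 | move=> x; rewrite mul0mx ip0r].
have [V [d [hV KV dpos]]] := eig_all sK pK (leqnn n.+1).
rewrite pid_mx_1 in hV.
have hV' : V *m V^T = 1%:M by apply: mulmx1C.
pose sd := \row_j Num.sqrt (d 0 j).
exists (V *m diag_mx sd *m V^T); split; first split.
- by rewrite !trmx_mul trmxK tr_diag_mx mulmxA.
- move=> x; rewrite -!mulmxA ipM.
  set y := V^T *m x.
  rewrite ipE sumr_ge0 // => i _; rewrite mul_diag_mx !mxE mulrCA mulr_ge0 ?sqrtr_ge0 //.
  by rewrite -expr2 sqr_ge0.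
- rewrite -!mulmxA (mulmxA V^T) hV mul1mx (mulmxA (diag_mx sd)) mulmx_diag.
  have -> : \row_j (sd 0 j * sd 0 j) = d.
    apply/matrixP => i j; rewrite (ord1 i) !mxE -expr2 sqr_sqrtr // ltW //.
  by rewrite mulmxA -KV -mulmxA hV' mulmx1.
Qed.

Lemma sqrtmxP n (K : 'M[R]_n) : spd K ->
  (sqrtmx K)^T = sqrtmx K /\ sqrtmx K *m sqrtmx K = K.
Proof.
move=> /sqrt_exists h.
have := ClassicalEpsilon.epsilon_spec (inhabits 0) _ h.
by rewrite -/(sqrtmx K) => [[[-> _] ->]].
Qed.

End Eig.

Section Alg.
Variable R : realType.

Lemma ipMsym n (M : 'M[R]_n) a b : M^T = M -> ip b (M *m a) = ip a (M *m b).
Proof. by move=> sM; rewrite ipM sM ipC. Qed.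

Lemma qexpB n (M : 'M[R]_n) a b : M^T = M ->
  ip (a - b) (M *m (a - b)) = ip a (M *m a) - 2 * ip a (M *m b) + ip b (M *m b).
Proof.
move=> sM; rewrite mulmxBr !ipBl !ipBr (ipMsym a b sM); ring.
Qed.

Lemma qexpD n (M : 'M[R]_n) a b : M^T = M ->
  ip (a + b) (M *m (a + b)) = ip a (M *m a) + 2 * ip a (M *m b) + ip b (M *m b).
Proof.
move=> sM; rewrite mulmxDr !ipDl !ipDr (ipMsym a b sM); ring.
Qed.

Lemma spd_unit n (A : 'M[R]_n) : spd A -> A \in unitmx.
Proof.
move=> [sA pA]; apply/negPn/negP => nA.
have : \det A == 0 by move: nA; rewrite unitmxE unitfE negbK.
case/det0P => v nv vA.
have nv' : v^T != 0 by rewrite -(inj_eq (@trmx_inj _ _ _)) trmxK trmx0.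
have := pA _ nv'; rewrite -{1}sA -trmx_mul vA trmx0 ip0r ltxx //.
Qed.

Lemma spd_ge0 n (A : 'M[R]_n) x : spd A -> 0 <= ip x (A *m x).
Proof.
move=> [_ pA]; have [->|nx] := eqVneq x 0; first by rewrite ip0l.
exact/ltW/pA.
Qed.

Variables (N r : nat) (M : 'M[R]_N) (D : 'M[R]_(N, r)) (Ki : 'M[R]_r).
Hypothesis sM : M^T = M.
Hypothesis KKi : D^T *m M *m D *m Ki = 1%:M.
Hypothesis sKi : Ki^T = Ki.

Definition bstar (u : 'cV[R]_N) := Ki *m D^T *m M *m u.

Lemma ls_min u beta :
  ip (u - D *m beta) (M *m (u - D *m beta)) =
  ip (u - D *m bstar u) (M *m (u - D *m bstar u)) +
  ip (beta - bstar u) ((D^T *m M *m D) *m (beta - bstar u)).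
Proof.
have e : u - D *m beta = (u - D *m bstar u) - D *m (beta - bstar u).
  by rewrite mulmxBr opprB addrA subrK.
rewrite e (qexpB _ _ sM).
have Z : D^T *m M *m (u - D *m bstar u) = 0.
  by rewrite mulmxBr /bstar !mulmxA KKi mul1mx subrr.
rewrite mulmxA (ipM (M *m D)) trmx_mul sM Z ip0l mulr0 subr0.
by rewrite (ipMl D) !mulmxA.
Qed.

Definition Gm := M *m D *m Ki *m D^T *m M.

Lemma ls_val u :
  ip (u - D *m bstar u) (M *m (u - D *m bstar u)) = ip u (M *m u) - ip u (Gm *m u).
Proof.
rewrite (qexpB _ _ sM).
set z := D^T *m M *m u.
have h1 : ip u (M *m (D *m bstar u)) = ip z (Ki *m z).
  by rewrite /bstar -!mulmxA (ipM M) sM (ipM D) /z -mulmxA.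
have h2 : ip (D *m bstar u) (M *m (D *m bstar u)) = ip z (Ki *m z).
  by rewrite (ipMl D) /bstar !mulmxA KKi mul1mx [LHS]ipC /z.
have h3 : ip u (Gm *m u) = ip z (Ki *m z).
  by rewrite /Gm -!mulmxA (ipM M) sM (ipM D) /z -mulmxA.
rewrite h1 h2 h3; ring.
Qed.

End Alg.

Section Wood.
Variable R : realType.

Lemma woodbury N r (T : 'M[R]_N) (U : 'M[R]_(r, N)) :
  T \in unitmx -> (T - U^T *m U) \in unitmx ->
  (1%:M - U *m invmx T *m U^T) \in unitmx /\
  invmx (T - U^T *m U) = invmx T + invmx T *m U^T *m
     invmx (1%:M - U *m invmx T *m U^T) *m U *m invmx T.
Proof.
move=> uT uQ.
set Ti := invmx T; set Q := T - U^T *m U; set W := 1%:M - U *m Ti *m U^T.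
set Qi := invmx Q.
have WU : W *m U = U *m Ti *m Q.
  rewrite /W /Q mulmxBl mul1mx mulmxBr -(mulmxA U Ti T) mulVmx // mulmx1.
  by rewrite !mulmxA.
pose X := 1%:M + U *m Qi *m U^T.
have WX : W *m X = 1%:M.
  rewrite /X mulmxDr mulmx1 !mulmxA WU -(mulmxA (U *m Ti)) mulmxV // mulmx1.
  by rewrite /W subrK.
have uW : W \in unitmx by case: (mulmx1_unit WX).
have iW : invmx W = X by rewrite -[X]mul1mx -(mulVmx uW) -mulmxA WX mulmx1.
split => //.
rewrite iW.
have QT : Q *m Ti = 1%:M - U^T *m U *m Ti.
  by rewrite /Q mulmxBl mulmxV.
have LW : (1%:M - U^T *m U *m Ti) *m U^T = U^T *m W.
  by rewrite mulmxBl mul1mx /W mulmxBr mulmx1 !mulmxA.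
set Y := Ti + _.
have QY : Q *m Y = 1%:M.
  rewrite /Y mulmxDr QT !mulmxA QT LW -!mulmxA (mulmxA W) WX mul1mx.
  by rewrite !mulmxA subrK.
by rewrite -[Y]mul1mx -(mulVmx uQ) -mulmxA QY mulmx1.
Qed.

End Wood.

Section Grad.
Variable R : realType.
Variables (N : nat) (f : 'cV[R]_N -> R) (H : 'M[R]_N) (b : 'cV[R]_N) (c : R).
Hypothesis sH : H^T = H.
Hypothesis hf : forall x, f x = 2^-1 * ip x (H *m x) + ip b x + c.

Lemma f_expand y w :
  f (y + w) = f y + ip (H *m y + b) w + 2^-1 * ip w (H *m w).
Proof.
rewrite !hf (qexpD _ _ sH) ipDr ipDl (ipMl H) sH [ip b w]ipC; lra.
Qed.

Lemma grad_quad y v : (forall x, 0 <= ip x (H *m x)) ->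
  is_gradient f y v -> v = H *m y + b.
Proof.
move=> pH hg; apply/eqP; apply/negPn/negP => nv.
set e := H *m y + b - v.
have ne : e != 0 by rewrite /e subr_eq0 eq_sym.
set a := ip e e.
have a0 : 0 < a by apply: ip_gt0.
set se := Num.sqrt a.
have se0 : 0 < se by rewrite sqrtr_gt0.
have sse : se * se = a by rewrite -expr2 sqr_sqrtr // ltW.
have eps0 : 0 < se / 2 by rewrite divr_gt0.
have [delta d0 hd] := hg _ eps0.
set t := delta / (2 * se).
have t0 : 0 < t by rewrite divr_gt0 // mulr_gt0.
set h := t *: e.
have nh : enorm h = t * se.
  rewrite /enorm /h ipZl ipZr mulrA (sqrtrM _ (mulr_ge0 (ltW t0) (ltW t0))) -expr2 sqrtr_sqr.
  by rewrite gtr0_norm.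
have tse : t * se = delta / 2.
  by rewrite /t; field; rewrite gt_eqF.
have := hd h; rewrite nh tse.
have -> : f (y + h) - f y - ip v h = t * a + 2^-1 * (t * t * ip e (H *m e)).
  rewrite f_expand /h -scalemxAr !ipZl !ipZr -/a.
  have -> : H *m y + b = e + v by rewrite /e subrK.
  rewrite ipDl /a; ring.
have hlt : delta / 2 < delta by lra.
move=> /(_ hlt) hb.
have c0 := mulr_ge0 (mulr_ge0 (ltW t0) (ltW t0)) (pH e).
have ta := mulr_gt0 t0 a0.
have hb' := le_trans (ler_norm _) hb.
have E2 : se / 2 * (delta / 2) = t * a / 2 by rewrite -tse -sse; field.
move: hb'; rewrite E2; lra.
Qed.

End Grad.

Unset Implicit Arguments.

Theorem mainTheorem1 (R : realType) (N r : nat)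
  (g : 'cV[R]_N -> \bar R) (f : 'cV[R]_N -> R) (df : 'cV[R]_N -> 'cV[R]_N)
  (L H T : 'M[R]_N) (b xk : 'cV[R]_N) (c : R) (D : 'M[R]_(N, r)) :
  proper_fun g -> lsc g ->
  C1_with_gradient f df ->
  spd L ->
  (exists dfL : 'cV[R]_N -> 'cV[R]_N,
      (forall z, is_gradient (fun z => f (isqrtmx L *m z)) z (dfL z)) /\
      lipschitz1 dfL) ->
  (exists m : R, forall x, (m%:E <= g x + (f x)%:E)%E) ->
  spd H ->
  (forall x, f x = 2^-1 * ip x (H *m x) + ip b x + c) ->
  \rank D = r ->
  spd T -> spd (T - H) ->
  let M := T - H in
  let y := fun beta : 'cV[R]_r => xk + D *m beta in
  let ell := fun x y => (g x + (f y + ip (df y) (x - y))%:E)%E in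
  let Phi := fun (xb : 'cV[R]_N * 'cV[R]_r) =>
     (ell xb.1 (y xb.2) + (2^-1 * sqnormV T (xb.1 - y xb.2))%:E)%E in
  let betastar := fun x =>
     invmx (D^T *m M *m D) *m D^T *m M *m (x - xk) in
  let U := isqrtmx (D^T *m M *m D) *m D^T *m M in
  let Q := T - U^T *m U in
  (forall x, is_argmin (fun beta => Phi (x, beta)) (betastar x)) /\
  (forall x, (exists beta, is_argmin Phi (x, beta)) <->
     is_argmin (fun x => (g x +
        (2^-1 * sqnormV Q (x - xk + invmx Q *m df xk))%:E)%E) x) /\
  spd Q /\
  \rank (U^T *m U) = r /\
  (1%:M - U *m invmx T *m U^T) \in unitmx /\
  invmx Q = invmx T + invmx T *m U^T *m invmx (1%:M - U *m invmx T *m U^T)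
              *m U *m invmx T.
Proof.
move=> _ _ [hgrad _] _ _ _ hH hf hrk hT hM M y ell Phi betastar U Q.
have sH : H^T = H := hH.1.
have sT : T^T = T := hT.1.
have sM : M^T = M := hM.1.
have df_eq : forall z, df z = H *m z + b.
  by move=> z; apply: (grad_quad sH hf _ (hgrad z)) => x; apply: spd_ge0.
pose K := D^T *m M *m D.
have sK : K^T = K by rewrite /K !trmx_mul trmxK sM mulmxA.
have [B BD] : exists B, B *m D = 1%:M.
  by apply/row_fullP; rewrite /row_full hrk.
have spdK : spd K.
  split => // x nx.
  have nDx : D *m x != 0.
    by apply: contra nx => /eqP h; rewrite -[x]mul1mx -BD -mulmxA h mulmx0.
  rewrite /K -!mulmxA (ipM D^T) trmxK; exact: hM.2.
have uK := spd_unit spdK.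
pose Ki := invmx K.
have KKi : K *m Ki = 1%:M by rewrite mulmxV.
have sKi : Ki^T = Ki by rewrite /Ki trmx_inv sK.
have [sS SS] := sqrtmxP spdK.
set S := sqrtmx K in sS SS.
have uS : S \in unitmx by move: uK; rewrite -SS unitmx_mul => /andP[].
pose Si := invmx S.
have sSi : Si^T = Si by rewrite /Si trmx_inv sS.
have SiSi : Si *m Si = Ki.
  rewrite -[LHS]mulmx1 -KKi /K -/K -SS !mulmxA -(mulmxA Si Si S) mulVmx // mulmx1.
  by rewrite mulVmx // mul1mx.
have UE : U = Si *m D^T *m M by [].
have UtU : U^T *m U = Gm M D Ki.
  rewrite UE !trmx_mul sM sSi trmxK /Gm -!mulmxA (mulmxA Si Si) SiSi.
  by rewrite !mulmxA.
have UD : U *m D = S.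
  by rewrite UE -!mulmxA (mulmxA D^T) -/K -SS mulmxA mulVmx // mul1mx.
have phiE : forall x beta, Phi (x, beta) =
  (g x + (f x + 2^-1 * ip (x - xk - D *m beta) (M *m (x - xk - D *m beta)))%:E)%E.
  move=> x beta; rewrite /Phi /ell /= -addeA -EFinD; congr (_ + _%:E)%E.
  set w := x - y beta.
  have ew : x - xk - D *m beta = w by rewrite /w /y opprD addrA.
  have -> : f x = f (y beta + w) by rewrite /w addrC subrK.
  have eM : ip w (M *m w) = ip w (T *m w) - ip w (H *m w) by rewrite /M mulmxBl ipBr.
  rewrite ew (f_expand sH hf) df_eq /sqnormV /ipV eM; lra.
have partA : forall x, is_argmin (fun beta => Phi (x, beta)) (betastar x).
  move=> x z; rewrite !phiE; apply: leeD2l; rewrite lee_fin lerD2l.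
  apply: ler_wpM2l; first by rewrite invr_ge0 ler0n.
  rewrite (ls_min sM KKi (x - xk) z) -[X in X <= _]addr0 lerD2l.
  exact: spd_ge0 spdK.
have sQ : Q^T = Q by rewrite /Q trB trmx_mul trmxK sT.
have QE : forall x, ip x (Q *m x) = ip x (T *m x) - ip x (Gm M D Ki *m x).
  by move=> x; rewrite /Q -UtU mulmxBl ipBr.
have spdQ : spd Q.
  split => // x nx.
  have h1 := ls_val sM KKi x.
  have h2 := spd_ge0 (x - D *m bstar M D Ki x) hM.
  have h3 := hH.2 x nx.
  have e1 : ip x (M *m x) = ip x (T *m x) - ip x (H *m x) by rewrite /M mulmxBl ipBr.
  rewrite QE; move: h2; rewrite h1 e1; lra.
have uQ := spd_unit spdQ.
pose Qi := invmx Q.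
have QQi : Q *m Qi = 1%:M by rewrite mulmxV.
pose g0 := df xk.
pose Cst := f xk - 2^-1 * ip (Qi *m g0) g0.
have valE : forall x, Phi (x, betastar x) =
   (g x + (2^-1 * sqnormV Q (x - xk + invmx Q *m df xk))%:E + Cst%:E)%E.
  move=> x; rewrite phiE -addeA -EFinD; congr (_ + _%:E)%E.
  set u := x - xk.
  rewrite (ls_val sM KKi u).
  have -> : f x = f (xk + u) by rewrite /u addrC subrK.
  rewrite (f_expand sH hf) -df_eq /sqnormV /ipV (qexpD _ _ sQ) mulmxA QQi mul1mx.
  rewrite !QE /Cst -/g0 -/Qi [ip g0 u]ipC.
  have e1 : ip u (M *m u) = ip u (T *m u) - ip u (H *m u) by rewrite /M mulmxBl ipBr.
  rewrite e1; lra.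
have partB : forall x, (exists beta, is_argmin Phi (x, beta)) <->
     is_argmin (fun x => (g x +
        (2^-1 * sqnormV Q (x - xk + invmx Q *m df xk))%:E)%E) x.
  move=> x; split.
  - move=> [beta hb] z.
    rewrite -(@leeD2rE _ Cst%:E) // -!valE.
    apply: le_trans (partA x beta) _.
    exact: hb (z, betastar z).
  - move=> hx; exists (betastar x) => [[z beta]].
    rewrite valE; apply: le_trans (partA z beta).
    by rewrite valE leeD2rE.
have rK : \rank K = r := mxrank_unit uK.
have hDG : D^T *m (U^T *m U) *m D = K.
  by rewrite mulmxA -trmx_mul -mulmxA UD sS SS.
have h1 : (\rank (U^T *m U) <= r)%N := leq_trans (mxrankM_maxr _ _) (rank_leq_row U).
have h2 : (\rank K <= \rank (U^T *m U))%N.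
  by rewrite -{1}hDG; apply: leq_trans (mxrankM_maxl _ _) (mxrankM_maxr _ _).
have [uW hW] := woodbury (spd_unit hT) uQ.
split => //; split => //; split => //; split => //.
by apply/eqP; rewrite eqn_leq h1 -{1}rK h2.
Qed.
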